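(* For every integer $n\ge 1$, $r(2,n)=(2^n+1)(2^{n-1}+1)/3$.
   Context: For $n\ge 1$, $r(2,n)$ denotes the number of orbits of the left action of $\mathrm{SL}(2,\mathbb{Z})$ on $(\mathbb{Z}_2\times\mathbb{Z}_2)^n$, where elements of $(\mathbb{Z}_2\times\mathbb{Z}_2)^n$ are viewed as $2\times n$ matrices over $\mathbb{Z}_2$ and a matrix in $\mathrm{SL}(2,\mathbb{Z})$ acts by left matrix multiplication with entries reduced modulo $2$. *)

(* Defs.v *)
From mathcomp Require Import all_boot all_order all_algebra.
From mathcomp Require Import boolp.
Set Implicit Arguments. Unset Strict Implicit. Unset Printing Implicit Defensive.
Import GRing.Theory.
Local Open Scope ring_scope.

Definition red2 (m n : nat) (A : 'M[int]_(m, n)) : 'M['F_2]_(m, n) :=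
  map_mx (fun z : int => z%:~R) A.

Definition sl2z_orbit (n : nat) (M : 'M['F_2]_(2, n)) : {set 'M['F_2]_(2, n)} :=
  [set N | `[< exists A : 'M[int]_2, \det A = 1 /\ N = red2 A *m M >] ].

Definition r2 (n : nat) : nat :=
  #|[set sl2z_orbit M | M : 'M['F_2]_(2, n)]|.

(* Main.v *)
Require Import Defs.
From mathcomp Require Import all_boot all_order all_algebra all_fingroup.
From mathcomp Require Import boolp zify.
Set Implicit Arguments. Unset Strict Implicit. Unset Printing Implicit Defensive.
Import GRing.Theory.
Local Open Scope ring_scope.

Definition mk (R : nzRingType) (a b c d : R) : 'M[R]_2 :=
  \matrix_(i, j) if i == 0 then (if j == 0 then a else b) else (if j == 0 then c else d).

Lemma det_mk (R : comNzRingType) (a b c d : R) : \det (mk a b c d) = a * d - b * c.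
Proof.
rewrite (expand_det_row _ ord0) !big_ord_recl big_ord0 /cofactor !det_mx11 !mxE /=.
by rewrite !expr0 !mul1r /bump /= expr1 mulN1r addr0 mulrN.
Qed.

Lemma ord2_cases (i : 'I_2) : i = 0 \/ i = 1.
Proof. case: i => [[|[|k]] Hk] //; [left|right]; exact: val_inj. Qed.

Lemma F2_cases (x : 'F_2) : x = 0 \/ x = 1.
Proof. case: x => m Hm; have : (m < 2)%N by exact: Hm.
case: m Hm => [|[|k]] Hm // _; [left|right]; exact: val_inj. Qed.

Lemma F2_m1 : (-1 : 'F_2) = 1.
Proof. apply: val_inj. vm_compute. reflexivity. Qed.

Lemma mk_eta (R : nzRingType) (B : 'M[R]_2) : B = mk (B 0 0) (B 0 1) (B 1 0) (B 1 1).
Proof.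
apply/matrixP => i j; rewrite !mxE.
by case: (ord2_cases i) => ->; case: (ord2_cases j) => ->.
Qed.

Lemma red2_mk (a b c d : int) : red2 (mk a b c d) = mk a%:~R b%:~R c%:~R d%:~R.
Proof. by apply/matrixP => i j; rewrite !mxE; case: (i == 0); case: (j == 0). Qed.

Ltac tryl X := exists X; split; [rewrite det_mk ?(mul0r,mulr0,mul1r,mulr1,mulN1r,subr0,sub0r,opprK); reflexivity | rewrite red2_mk ?rmorphN ?rmorph0 ?rmorph1 ?F2_m1; reflexivity].

Lemma lift_ex (B : 'M['F_2]_2) : B \in unitmx ->
  exists A : 'M[int]_2, \det A = 1 /\ red2 A = B.
Proof.
rewrite unitmxE unitfE (mk_eta B) det_mk.
case: (F2_cases (B 0 0)) => ->; case: (F2_cases (B 0 1)) => ->;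
case: (F2_cases (B 1 0)) => ->; case: (F2_cases (B 1 1)) => ->;
rewrite ?mul0r ?mulr0 ?mul1r ?subr0 ?sub0r ?subrr ?eqxx // => _;
first [ (exists (mk 1 0 0 1); split; [rewrite det_mk ?(mul0r,mulr0,mul1r,mulr1,mulN1r,subr0,sub0r,opprK); reflexivity | rewrite red2_mk ?rmorphN ?rmorph0 ?rmorph1 ?F2_m1; reflexivity])
  | (exists (mk 0 (-1) 1 0); split; [rewrite det_mk ?(mul0r,mulr0,mul1r,mulr1,mulN1r,subr0,sub0r,opprK); reflexivity | rewrite red2_mk ?rmorphN ?rmorph0 ?rmorph1 ?F2_m1; reflexivity])
  | (exists (mk 1 1 0 1); split; [rewrite det_mk ?(mul0r,mulr0,mul1r,mulr1,mulN1r,subr0,sub0r,opprK); reflexivity | rewrite red2_mk ?rmorphN ?rmorph0 ?rmorph1 ?F2_m1; reflexivity])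
  | (exists (mk 1 0 1 1); split; [rewrite det_mk ?(mul0r,mulr0,mul1r,mulr1,mulN1r,subr0,sub0r,opprK); reflexivity | rewrite red2_mk ?rmorphN ?rmorph0 ?rmorph1 ?F2_m1; reflexivity])
  | (exists (mk 0 (-1) 1 1); split; [rewrite det_mk ?(mul0r,mulr0,mul1r,mulr1,mulN1r,subr0,sub0r,opprK); reflexivity | rewrite red2_mk ?rmorphN ?rmorph0 ?rmorph1 ?F2_m1; reflexivity])
  | (exists (mk 1 (-1) 1 0); split; [rewrite det_mk ?(mul0r,mulr0,mul1r,mulr1,mulN1r,subr0,sub0r,opprK); reflexivity | rewrite red2_mk ?rmorphN ?rmorph0 ?rmorph1 ?F2_m1; reflexivity]) ].
Qed.

Local Notation GL2 := {'GL_2['F_2]}.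

Definition act2 n (M : 'M['F_2]_(2, n)) (g : GL2) : 'M['F_2]_(2, n) :=
  GLval g^-1 *m M.

Lemma act2_1 n : (@act2 n)^~ 1%g =1 id.
Proof. by move=> M; rewrite /act2 invg1 GL_1E mul1mx. Qed.

Lemma act2_M n (M : 'M['F_2]_(2, n)) : act_morph (@act2 n) M.
Proof. by move=> a b; rewrite /act2 invMg GL_MxE mulmxA. Qed.

Definition to2 n := TotalAction (@act2_1 n) (@act2_M n).

Lemma orbit_eq n (M : 'M['F_2]_(2, n)) :
  sl2z_orbit M = orbit (to2 n) [set: GL2] M.
Proof.
apply/setP => N; rewrite inE; apply/asboolP/imsetP.
- case=> A [dA ->].
  have HU : red2 A \in unitmx.
    by rewrite unitmxE /red2 det_map_mx dA rmorph1 unitr1.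
  exists ((Sub (red2 A) HU : GL2)^-1)%g; first by rewrite inE.
  by rewrite /= /act2 invgK SubK.
- case=> g _ ->; rewrite /= /act2.
  have [A [dA eA]] := lift_ex (GL_unitmx g^-1).
  by exists A; split; rewrite ?eA.
Qed.

Lemma r2_orbits n : r2 n = #|orbit (to2 n) [set: GL2] @: [set: 'M['F_2]_(2,n)]|.
Proof.
rewrite /r2; apply: eq_card => X.
apply/imsetP/imsetP; case=> M _ ->; exists M => //; by rewrite orbit_eq.
Qed.

Lemma acts2 n : [acts [set: GL2], on [set: 'M['F_2]_(2,n)] | to2 n].
Proof. by apply/subsetP => a _; rewrite !inE; apply/subsetP => x _; rewrite !inE. Qed.

Definition fixc n (B : 'M['F_2]_2) := #|[set M : 'M['F_2]_(2, n) | B *m M == M]|.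

Lemma sum_fix n :
  \sum_(a in [set: GL2]) #|('Fix_([set: 'M['F_2]_(2,n)] | to2 n)[a])%g| =
  \sum_(a : GL2) fixc n (GLval a).
Proof.
transitivity (\sum_(a : GL2) fixc n (GLval a^-1)).
  apply: eq_big => [a|a _]; first by rewrite inE.
  rewrite setTI /fixc; apply: eq_card => M; rewrite !inE.
  by rewrite sub1set inE.
rewrite (reindex_inj invg_inj) /=; apply: eq_bigr => a _; by rewrite invrK.
Qed.

Lemma sum_GL (F : 'M['F_2]_2 -> nat) :
  \sum_(g : GL2) F (GLval g) = \sum_(B | B \in unitmx) F B.
Proof.
rewrite (reindex_omap (GLval : GL2 -> _) insub) /=; last first.
  by move=> B HB; rewrite insubT.
apply: eq_bigl => g; move: (GL_unitmx g) => /= ->; by rewrite valK eqxx.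
Qed.

Lemma mk_eq (R : nzRingType) (a b c d a' b' c' d' : R) :
  (mk a b c d == mk a' b' c' d') = [&& a == a', b == b', c == c' & d == d'].
Proof.
apply/eqP/and4P => [H|[/eqP-> /eqP-> /eqP-> /eqP->] //].
have E i j : mk a b c d i j = mk a' b' c' d' i j by rewrite H.
move: (E 0 0) (E 0 1) (E 1 0) (E 1 1); rewrite !mxE /= => -> -> -> ->.
by rewrite !eqxx.
Qed.

Lemma F2_01 : ((0 : 'F_2) == 1) = false.
Proof. by rewrite eq_sym oner_eq0. Qed.

Definition L2 : seq 'M['F_2]_2 :=
  [:: mk 1 0 0 1; mk 0 1 1 0; mk 1 1 0 1; mk 1 0 1 1; mk 0 1 1 1; mk 1 1 1 0].

Lemma unitL (B : 'M['F_2]_2) : (B \in unitmx) = (B \in L2).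
Proof.
rewrite unitmxE unitfE (mk_eta B) det_mk.
case: (F2_cases (B 0 0)) => ->; case: (F2_cases (B 0 1)) => ->;
case: (F2_cases (B 1 0)) => ->; case: (F2_cases (B 1 1)) => ->;
rewrite ?mul0r ?mulr0 ?mul1r ?subr0 ?sub0r ?subrr ?oppr_eq0 ?eqxx ?oner_eq0 /=
  !inE !mk_eq ?eqxx ?F2_01 ?oner_eq0 //.
Qed.

Lemma uniqL : uniq L2.
Proof. by rewrite /L2 /= !inE !mk_eq ?eqxx ?F2_01 ?oner_eq0. Qed.

Lemma sum_unit (F : 'M['F_2]_2 -> nat) :
  \sum_(B | B \in unitmx) F B =
  (F (mk 1 0 0 1) + F (mk 0 1 1 0) + F (mk 1 1 0 1) + F (mk 1 0 1 1)
   + F (mk 0 1 1 1) + F (mk 1 1 1 0))%N.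
Proof.
rewrite (eq_bigl (fun B => B \in L2)); last by move=> B; rewrite unitL.
rewrite -big_uniq ?uniqL //= !big_cons big_nil.
by rewrite addr0 !addrA.
Qed.

Definition phi n (p : 'rV['F_2]_n * 'rV['F_2]_n) : 'M['F_2]_(2, n) :=
  \matrix_(i, j) if i == 0 then p.1 0 j else p.2 0 j.

Lemma phi_inj n : injective (@phi n).
Proof.
move=> [u v] [u' v'] H.
have E i j : phi (u, v) i j = phi (u', v') i j by rewrite H.
congr pair; apply/rowP => j.
- by move: (E 0 j); rewrite !mxE.
- by move: (E 1 j); rewrite !mxE.
Qed.

Lemma card_phi n (Q : pred 'M['F_2]_(2, n)) :
  #|[set M | Q M]| = #|[set p | Q (phi p)]|.
Proof.
rewrite -(card_imset _ (@phi_inj n)); apply: eq_card => M; rewrite !inE.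
apply/idP/imsetP => [HQ|[p]]; last by rewrite inE => HQ ->.
have EM : M = phi (row 0 M, row 1 M).
  apply/matrixP => i j; rewrite !mxE.
  by case: (ord2_cases i) => ->.
by exists (row 0 M, row 1 M) => //; rewrite inE -EM.
Qed.

Lemma mul_phi n (a b c d : 'F_2) p :
  (mk a b c d *m @phi n p == phi p) =
  (a *: p.1 + b *: p.2 == p.1) && (c *: p.1 + d *: p.2 == p.2).
Proof.
have E i j : (mk a b c d *m phi p) i j =
   if i == 0 then a * p.1 0 j + b * p.2 0 j else c * p.1 0 j + d * p.2 0 j.
  by rewrite !mxE !big_ord_recl big_ord0 !mxE /=; case: (i == 0); rewrite addr0.
apply/eqP/andP => [H|[/eqP H1 /eqP H2]].
  split; apply/eqP/rowP => j; rewrite !mxE.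
  - by move: (E 0 j); rewrite H !mxE /=.
  - by move: (E 1 j); rewrite H !mxE /=.
apply/matrixP => i j; rewrite E !mxE.
case: (i == 0).
- by rewrite -[in RHS]H1 !mxE.
- by rewrite -[in RHS]H2 !mxE.
Qed.

Lemma card_rV n : #|'rV['F_2]_n| = (2 ^ n)%N.
Proof. by rewrite card_mx card_Fp // mul1n. Qed.

Lemma card_imrV n (f : 'rV['F_2]_n -> 'rV['F_2]_n * 'rV['F_2]_n) (Q : pred _) :
  injective f -> (forall p, Q p = (p \in [set f u | u in [set: 'rV['F_2]_n]])) ->
  #|[set p | Q p]| = (2 ^ n)%N.
Proof.
move=> fi HQ; rewrite -card_rV -[#|'rV_n|]cardsT -(card_imset _ fi).
by apply: eq_card => p; rewrite inE HQ.
Qed.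

Lemma addr_eqI (V : zmodType) (x y : V) : (x + y == x) = (y == 0).
Proof. by rewrite -{2}[x]addr0 (inj_eq (addrI x)). Qed.

Lemma fixc_mk n (a b c d : 'F_2) : fixc n (mk a b c d) =
  #|[set p : 'rV['F_2]_n * 'rV['F_2]_n |
     (a *: p.1 + b *: p.2 == p.1) && (c *: p.1 + d *: p.2 == p.2)]|.
Proof. by rewrite /fixc card_phi; apply: eq_card => p; rewrite !inE mul_phi. Qed.

Ltac simpl_sc := rewrite ?scale1r ?scale0r ?addr0 ?add0r.

Lemma fix1 n : fixc n (mk 1 0 0 1) = (2 ^ n * 2 ^ n)%N.
Proof.
rewrite fixc_mk -card_rV -card_prod; apply: eq_card => -[u v].
by rewrite !inE /=; simpl_sc; rewrite !eqxx.
Qed.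

Lemma fix2 n : fixc n (mk 0 1 1 0) = (2 ^ n)%N.
Proof.
rewrite fixc_mk; apply: (card_imrV (f := fun u => (u, u))) => [u v [->] //|[u v]].
rewrite /=; simpl_sc; apply/andP/imsetP => [[/eqP-> _]|[w _ [-> ->]]].
  by exists u; rewrite ?inE.
by split.
Qed.

Lemma fix3 n : fixc n (mk 1 1 0 1) = (2 ^ n)%N.
Proof.
rewrite fixc_mk; apply: (card_imrV (f := fun u => (u, 0))) => [u v [->] //|[u v]].
rewrite /=; simpl_sc; rewrite addr_eqI eqxx andbT.
apply/eqP/imsetP => [->|[w _ [_ ->]]] //.
by exists u; rewrite ?inE.
Qed.

Lemma fix4 n : fixc n (mk 1 0 1 1) = (2 ^ n)%N.
Proof.
rewrite fixc_mk; apply: (card_imrV (f := fun u => (0, u))) => [u v [->] //|[u v]].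
rewrite /=; simpl_sc; rewrite addrC addr_eqI eqxx /=.
apply/eqP/imsetP => [->|[w _ [-> _]]] //.
by exists v; rewrite ?inE.
Qed.

Lemma fix5 n : fixc n (mk 0 1 1 1) = 1%N.
Proof.
rewrite fixc_mk -[RHS](cards1 ((0 : 'rV['F_2]_n), (0 : 'rV['F_2]_n))).
apply: eq_card => -[u v]; rewrite !inE /=; simpl_sc; rewrite addrC addr_eqI.
rewrite xpair_eqE.
by case: (u =P 0) => [->|]; rewrite /= ?andbT ?andbF.
Qed.

Lemma fix6 n : fixc n (mk 1 1 1 0) = 1%N.
Proof.
rewrite fixc_mk -[RHS](cards1 ((0 : 'rV['F_2]_n), (0 : 'rV['F_2]_n))).
apply: eq_card => -[u v]; rewrite !inE /=; simpl_sc; rewrite addr_eqI.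
rewrite xpair_eqE.
by case: (v =P 0) => [->|]; rewrite /= ?andbT ?andbF.
Qed.

Lemma orbits_count n :
  (#|orbit (to2 n) [set: GL2] @: [set: 'M['F_2]_(2,n)]| * 6 =
   2 ^ n * 2 ^ n + 2 ^ n + 2 ^ n + 2 ^ n + 1 + 1)%N.
Proof.
have FC := Frobenius_Cauchy (acts2 n).
rewrite sum_fix sum_GL sum_unit fix1 fix2 fix3 fix4 fix5 fix6 in FC.
by move: FC; rewrite card_GL_2 card_Fp // => ->.
Qed.

Local Close Scope ring_scope.

Theorem corollary4p4 (n : nat) : (1 <= n)%N ->
  r2 n = ((2 ^ n + 1) * (2 ^ n.-1 + 1)) %/ 3.
Proof.
move=> Hn; rewrite r2_orbits.
have := orbits_count n.
set X := #|_|.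
case: n Hn X => // m _ X; rewrite expnS /=.
set k := 2 ^ m => H.
have -> : (2 * k + 1) * (k + 1) = X * 3 by nia.
by rewrite mulnK.
Qed.
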